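(* Let $S_N$ denote the $N$-th large Schröder number and $C_N=\frac{1}{N+1}\binom{2N}{N}$ the $N$-th Catalan number. For every non-negative integer $n$, $$v_3(S_{2n+1})=v_3(C_n),\qquad v_3(S_{2n+2})=1+v_3(2n+1)+v_3(C_n).$$
   Context: The large Schröder number $S_N$ is the number of lattice paths from $(0,0)$ to $(N,N)$ using steps $(1,0)$, $(0,1)$, $(1,1)$ that never go above the diagonal $y=x$ (so $S_0=1,S_1=2,S_2=6,\dots$). $v_3(y)$ denotes the $3$-adic valuation of a nonzero integer $y$. *)

(* Defs.v *)
From mathcomp Require Import all_boot.
Set Implicit Arguments. Unset Strict Implicit. Unset Printing Implicit Defensive.

Inductive step := E | Nst | D.

Definition step_vec (s : step) : nat * nat :=
  match s with E => (1, 0) | Nst => (0, 1) | D => (1, 1) end.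

Fixpoint all_paths (k : nat) : seq (seq step) :=
  match k with
  | 0 => [:: [::]]
  | k'.+1 => flatten [seq [:: E :: p; Nst :: p; D :: p] | p <- all_paths k']
  end.

Fixpoint valid_from (N x y : nat) (p : seq step) : bool :=
  match p with
  | [::] => (x == N) && (y == N)
  | s :: p' => let x' := x + (step_vec s).1 in let y' := y + (step_vec s).2 in
               (y' <= x') && valid_from N x' y' p'
  end.

(* Large Schroeder number: number of such paths from (0,0) to (N,N).
   Every step increases x+y by 1 or 2, so any such path has at most 2N steps. *)
Definition schroeder (N : nat) : nat :=
  sumn [seq count (valid_from N 0 0) (all_paths k) | k <- iota 0 (2 * N).+1].

Definition catalan (n : nat) : nat := 'C(2 * n, n) %/ n.+1.

(* Main.v *)
Require Import Defs.
From mathcomp Require Import all_boot all_algebra zify ring.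
Import GRing.Theory Num.Theory.


Definition cnt N k x y := count (valid_from N x y) (all_paths k).

Lemma cnt0 N x y : cnt N 0 x y = ((x == N) && (y == N)).
Proof. by rewrite /cnt /=; case: (_ && _). Qed.

Lemma count_andb {T} (b : bool) (P : pred T) s :
  count (fun p => b && P p) s = b * count P s.
Proof. by case: b => /=; rewrite ?mul1n ?mul0n // count_pred0. Qed.

Lemma cntS N k x y : cnt N k.+1 x y =
  (y <= x.+1) * cnt N k x.+1 y + (y.+1 <= x) * cnt N k x y.+1
  + (y <= x) * cnt N k x.+1 y.+1.
Proof.
rewrite /cnt /= count_flatten.
have -> : forall s, sumn [seq count (valid_from N x y) x0 | x0 <- [seq [:: E :: p; Nst :: p; D :: p] | p <- s]]
  = (y <= x.+1) * count (valid_from N x.+1 y) s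
  + (y.+1 <= x) * count (valid_from N x y.+1) s
  + (y <= x) * count (valid_from N x.+1 y.+1) s.
  elim=> [|p s IH] /=; first by rewrite !muln0.
  rewrite IH /= !addn0 !addn1 ltnS.
  case: (y <= x.+1); case: (y.+1 <= x); case: (y <= x) => /=; lia.
by [].
Qed.

Lemma cnt_big N k x y : N + N < x + y + k -> cnt N k x y = 0.
Proof.
elim: k x y => [|k IH] x y H.
  rewrite cnt0; case: eqP => // Ex; case: eqP => // Ey; lia.
rewrite cntS !IH //; lia.
Qed.

Lemma cnt_xbig N k x y : N < x -> cnt N k x y = 0.
Proof.
elim: k x y => [|k IH] x y H.
  rewrite cnt0; case: eqP => // Ex; lia.
rewrite cntS !IH //; lia.
Qed.

Lemma cnt_ybig N k x y : N < y -> cnt N k x y = 0.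
Proof.
elim: k x y => [|k IH] x y H.
  rewrite cnt0 andbC; case: eqP => // Ex; lia.
rewrite cntS !IH //; lia.
Qed.

Definition T N x y := \sum_(k < (N + N).+1) cnt N k x y.

Lemma schroederE N : schroeder N = T N 0 0.
Proof.
rewrite /schroeder /T sumnE big_map -(subn0 (2*N).+1) -/(index_iota 0 _) big_mkord.
by have -> : 2 * N = N + N by lia.
Qed.

Lemma T_tail N x y : 0 < x + y -> \sum_(k < N + N) cnt N k x y = T N x y.
Proof.
move=> H; rewrite /T big_ord_recr /= cnt_big ?addn0 //.
by rewrite -{1}(add0n (N+N)) ltn_add2r.
Qed.

Lemma TS N x y : T N x y = ((x == N) && (y == N))
  + (y <= x.+1) * T N x.+1 y + (y.+1 <= x) * T N x y.+1
  + (y <= x) * T N x.+1 y.+1.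
Proof.
rewrite {1}/T big_ord_recl /= cnt0 -!addnA; congr (_ + _).
rewrite -!T_tail ?addSn ?addnS // !big_distrr -!big_split /=.
by apply: eq_bigr => i _; rewrite /bump /= cntS addnA.
Qed.

Lemma T_xbig N x y : N < x -> T N x y = 0.
Proof. by move=> H; rewrite /T big1 // => i _; rewrite cnt_xbig. Qed.
Lemma T_ybig N x y : N < y -> T N x y = 0.
Proof. by move=> H; rewrite /T big1 // => i _; rewrite cnt_ybig. Qed.

Section PolyPart.
Set Implicit Arguments. Unset Strict Implicit. Unset Printing Implicit Defensive.
Local Open Scope ring_scope.

Definition small (M : nat) (p : {poly int}) := exists h : {poly int}, p = 'X^M * h.

Lemma small0 M : small M 0. Proof. by exists 0; rewrite mulr0. Qed.
Lemma smallD M p q : small M p -> small M q -> small M (p + q).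
Proof. by move=> [a ->] [b ->]; exists (a + b); rewrite mulrDr. Qed.
Lemma smallN M p : small M p -> small M (- p).
Proof. by move=> [a ->]; exists (- a); rewrite mulrN. Qed.
Lemma smallB M p q : small M p -> small M q -> small M (p - q).
Proof. by move=> hp hq; apply: smallD => //; apply: smallN. Qed.
Lemma smallMl M p q : small M p -> small M (q * p).
Proof. by move=> [a ->]; exists (q * a); rewrite mulrCA. Qed.
Lemma smallMr M p q : small M p -> small M (p * q).
Proof. by move=> hp; rewrite mulrC; apply: smallMl. Qed.
Lemma smallX M k h : (M <= k)%N -> small M ('X^k * h).
Proof. by move=> hk; exists ('X^(k - M) * h); rewrite mulrA -exprD subnKC. Qed.
Lemma small_coef M p i : small M p -> (i < M)%N -> p`_i = 0.
Proof. by move=> [a ->] hi; rewrite coefXnM hi. Qed.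

Definition R1 (M : nat) : {poly int} := \sum_(i < M) 3 ^+ i * 'X^i.
Definition RR M := 'X * R1 M.

Lemma R1E M : (1 - 3 * 'X) * R1 M = 1 - 3 ^+ M * 'X^M.
Proof.
elim: M => [|M IH]; first by rewrite /R1 big_ord0 mulr0 expr0 expr0 mulr1 subrr.
rewrite /R1 big_ord_recr /= mulrDr -/(R1 M) IH !exprS; ring.
Qed.

Lemma XR M : 'X * (1 + 3 * RR M) - RR M = 3 ^+ M * 'X^(M.+1).
Proof.
have := R1E M; rewrite /RR exprS => H.
have -> : 'X * (1 + 3 * ('X * R1 M)) - 'X * R1 M = 'X * (1 - (1 - 3 * 'X) * R1 M) by ring.
rewrite H; ring.
Qed.

Definition bm (n m : nat) : nat := if m is m'.+1 then 'C(n, m') else 0%N.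
Definition balz (j m : nat) : int :=
  if j is j'.+1 then ('C(2 * m + j', m))%:Z - (bm (2 * m + j') m)%:Z
  else (m == 0%N)%:Z.

Lemma bal_0 j : balz j 0 = 1.
Proof. by case: j => //= j; rewrite bin0. Qed.

Lemma bal_rec j m : balz j.+1 m.+1 = balz j m.+1 + balz j.+2 m.
Proof.
case: j => [|j] /=.
  rewrite !addn0 add0r.
  have -> : (2 * m.+1 = (2 * m).+1.+1)%N by lia.
  have -> : (2 * m + 1 = (2 * m).+1)%N by lia.
  have h1 := binS (2 * m).+1 m.
  have h2 : 'C((2 * m).+1, m.+1) = 'C((2 * m).+1, m).
    by rewrite -bin_sub; [congr 'C(_, _); lia | lia].
  case: m h1 h2 => [|m] h1 h2 /=; first by rewrite !bin0 bin1.
  have h3 := binS (2 * m.+1).+1 m.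
  move: h1 h2 h3; set n := (2 * m.+1)%N; lia.
have -> : (2 * m.+1 + j.+1 = (2 * m + j.+2).+1)%N by lia.
have -> : (2 * m.+1 + j = (2 * m + j.+2))%N by lia.
have h1 := binS (2 * m + j.+2) m.
case: m h1 => [|m] h1 /=; first by rewrite !bin0 !bin1; lia.
have h2 := binS (2 * m.+1 + j.+2) m.
move: h1 h2; set n := (2 * m.+1 + j.+2)%N; lia.
Qed.

Definition cf (j m : nat) : int := 2 ^+ (m + j) * balz j m.
Definition H M j : {poly int} := \sum_(m < M) (cf j m)%:P * RR M ^+ (2 * m + j).

Lemma cf_rec j m : cf j.+1 m.+1 = 2 * cf j m.+1 + cf j.+2 m.
Proof.
rewrite /cf bal_rec mulrDr !addnS !addSn !exprS; ring.
Qed.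

Lemma H_recE M j : H M.+1 j.+1 - 2%:P * RR M.+1 * H M.+1 j - RR M.+1 * H M.+1 j.+2
  = - ((cf j.+2 M)%:P * RR M.+1 ^+ (2 * M + j.+3)).
Proof.
rewrite /H big_ord_recl [X in _ - _ * X - _]big_ord_recl [X in _ - _ - _ * X]big_ord_recr /=.
rewrite !mulrDr !mulr_sumr.
have E1 : \sum_(i < M) (cf j.+1 (bump 0 i))%:P * RR M.+1 ^+ (2 * bump 0 i + j.+1)
   = \sum_(i < M) 2%:P * RR M.+1 * ((cf j (bump 0 i))%:P * RR M.+1 ^+ (2 * bump 0 i + j))
   + \sum_(i < M) RR M.+1 * ((cf j.+2 i)%:P * RR M.+1 ^+ (2 * i + j.+2)).
  rewrite -big_split; apply: eq_bigr => i _ /=.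
  rewrite /bump /= add1n cf_rec polyCD polyCM.
  have -> : (2 * i.+1 + j.+1 = (2 * i + j.+2).+1)%N by lia.
  have -> : (2 * i.+1 + j = (2 * i + j.+2))%N by lia.
  rewrite exprS; ring.
rewrite E1.
have -> : (2 * M + j.+3 = (2 * M + j.+2).+1)%N by lia.
have -> : cf j.+1 0 = 2 * cf j 0 by rewrite /cf !bal_0 !add0n exprS; ring.
rewrite muln0 !add0n polyCM exprS [in RHS]exprS; ring.
Qed.

Lemma RR_small M k : (M <= k)%N -> small M (RR M ^+ k).
Proof. by move=> hk; rewrite /RR exprMn; apply: smallX. Qed.

Lemma H_rec M j : small M (H M j.+1 - 2%:P * RR M * H M j - RR M * H M j.+2).
Proof.
case: M => [|M]; first by exists (H 0 j.+1 - 2%:P * RR 0 * H 0 j - RR 0 * H 0 j.+2); rewrite expr0 mul1r.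
rewrite H_recE; apply: smallN; apply: smallMl; apply: RR_small; lia.
Qed.

Lemma smallW M k p : (k <= M)%N -> small M p -> small k p.
Proof. by move=> hk [h ->]; rewrite -(subnKC hk) exprD -mulrA; exists ('X^(M - k) * h). Qed.

Lemma small_unit M q : small M ((1 + 3 * RR M) * q) -> small M q.
Proof.
move=> [h Hh].
suff : forall k, (k <= M)%N -> small k q by apply.
elim=> [|k IH] hk; first by exists q; rewrite expr0 mul1r.
have [g Hg] := IH (ltnW hk).
have -> : q = (1 + 3 * RR M) * q - 3 * RR M * q by ring.
rewrite Hh; apply: smallB; first by apply: smallX.
by rewrite Hg /RR; exists (3 * R1 M * g); rewrite exprS; ring.
Qed.

Definition Q M j := H M j.+1 - 'X * (2 * H M j + 3 * H M j.+1 + H M j.+2).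

Lemma Q_small M j : small M (Q M j).
Proof.
apply: small_unit.
have := H_rec M j; rewrite polyC_natr => h1.
have h2 : small M ('X * (1 + 3 * RR M) - RR M).
  by rewrite XR; exists (3 ^+ M * 'X); rewrite exprS; ring.
have -> : (1 + 3 * RR M) * Q M j = (H M j.+1 - 2 * RR M * H M j - RR M * H M j.+2)
   - ('X * (1 + 3 * RR M) - RR M) * (2 * H M j + 3 * H M j.+1 + H M j.+2)
  by rewrite /Q; ring.
by apply: smallB => //; apply: smallMr.
Qed.

Definition trans (f : nat -> {poly int}) d := \sum_(j < d.+1) ('C(d, j))%:R * f j.

Lemma transS f d : trans f d.+1 = trans f d + trans (fun j => f j.+1) d.
Proof.
rewrite /trans big_ord_recl [X in _ = X + _]big_ord_recl /= !bin0 -addrA; congr (_ + _).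
have -> : \sum_(i < d.+1) ('C(d.+1, bump 0 i))%:R * f (bump 0 i)
  = \sum_(i < d.+1) ('C(d, i.+1))%:R * f i.+1 + \sum_(i < d.+1) ('C(d, i))%:R * f i.+1.
  by rewrite -big_split; apply: eq_bigr => i _ /=; rewrite /bump /= add1n binS natrD mulrDl.
congr (_ + _).
by rewrite big_ord_recr /= bin_small // mul0r addr0.
Qed.

Lemma trans_lin f g h k d : trans (fun j => f j - 'X * (2 * g j + 3 * h j + k j)) d
  = trans f d - 'X * (2 * trans g d + 3 * trans h d + trans k d).
Proof.
rewrite /trans !mulr_sumr -!big_split mulr_sumr -sumrB; apply: eq_bigr => i _ /=; ring.
Qed.

Lemma trans_small M f d : (forall j, small M (f j)) -> small M (trans f d).
Proof.
move=> hf; rewrite /trans; elim/big_ind: _ => //; first exact: small0.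
  exact: smallD.
by move=> i _; apply: smallMl.
Qed.

Definition Fp M d := trans (H M) d.

Lemma Fp_rel M d : small M (Fp M d.+1 - Fp M d - 'X * Fp M d.+1 - 'X * Fp M d.+2).
Proof.
have -> : Fp M d.+1 - Fp M d - 'X * Fp M d.+1 - 'X * Fp M d.+2 = trans (Q M) d.
  rewrite /Fp /Q trans_lin transS [trans _ d.+2]transS transS.
  rewrite (transS (fun j => H M j.+1)) /=; ring.
by apply: trans_small => j; apply: Q_small.
Qed.

Lemma coefn (n : nat) (p : {poly int}) i : ((n%:R : {poly int}) * p)`_i = n%:R * p`_i.
Proof. by rewrite -polyC_natr coefCM. Qed.

Lemma RR_coef0 M L : (RR M ^+ L.+1)`_0 = 0.
Proof. by rewrite exprS /RR -mulrA coefXM. Qed.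

Lemma RR_coef_rec M L i : (i < M)%N ->
  (RR M ^+ L.+1)`_i.+1 = (RR M ^+ L)`_i + 3 * (RR M ^+ L.+1)`_i.
Proof.
move=> hi.
have E : RR M = 'X + 3 * 'X * RR M - 3 ^+ M * 'X^(M.+1).
  by rewrite -XR; ring.
have E3 : RR M ^+ L.+1 = 'X * RR M ^+ L + 'X * (3 * RR M ^+ L.+1) - 'X^(M.+1) * (3 ^+ M * RR M ^+ L).
  have E2 : RR M ^+ L.+1 = RR M ^+ L * ('X + 3 * 'X * RR M - 3 ^+ M * 'X^(M.+1))
    by rewrite -E exprSr.
  rewrite {1}E2 [RR M ^+ L.+1]exprSr; ring.
rewrite {1}E3 coefB coefD !coefXM coefXnM /= ltnS hi subr0.
by rewrite coefn.
Qed.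

Lemma RR_coef M L n : (n < M)%N -> (RR M ^+ L.+1)`_n.+1 = ((3 ^ (n - L) * 'C(n, L))%N)%:R.
Proof.
elim: n L => [|n IH] L hn.
  rewrite RR_coef_rec // RR_coef0 mulr0 addr0.
  case: L => [|L]; first by rewrite expr0 coef1.
  by rewrite RR_coef0 bin0n.
rewrite RR_coef_rec // IH ?(ltnW hn) //.
case: L => [|L].
  by rewrite expr0 coef1 /= add0r !subn0 !bin0 !muln1 expnS natrM.
rewrite IH ?(ltnW hn) // binS subSS.
case: (ltnP L n) => hL.
  have -> : (n - L = (n - L.+1).+1)%N by lia.
  rewrite expnS !natrM !natrD ?natrM; ring.
have -> : 'C(n, L.+1) = 0%N by rewrite bin_small // ltnS.
by rewrite muln0 mulr0 addr0 add0n.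
Qed.

Lemma trans0 f : trans f 0 = f 0.
Proof. by rewrite /trans big_ord1 bin0 mul1r. Qed.

Lemma trans1 f : trans f 1 = f 0 + f 1.
Proof. by rewrite /trans !big_ord_recl big_ord0 /= addr0 !bin0 binn !mul1r. Qed.

Lemma H0 M : H M.+1 0 = 1.
Proof.
rewrite /H big_ord_recl big1 /=.
  by rewrite /cf bal_0 expr0 mulr1 addr0 mul1r.
by move=> i _; rewrite /cf /= /bump /= mulr0 mul0r.
Qed.

Lemma Fp_coef_rel M d u : (u.+1 < M)%N ->
  (Fp M d.+1)`_u.+1 = (Fp M d)`_u.+1 + (Fp M d.+1)`_u + (Fp M d.+2)`_u.
Proof.
move=> hu; have := small_coef (Fp_rel M d) hu.
rewrite !coefB !coefXM /= => h.
apply/eqP; rewrite -subr_eq0; apply/eqP; rewrite -[RHS]h; ring.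
Qed.

Lemma Fp_coef0 M d : (0 < M)%N -> (Fp M d)`_0 = 1.
Proof.
case: M => // M _; elim: d => [|d IH]; first by rewrite /Fp trans0 H0 coef1.
have := small_coef (Fp_rel M.+1 d) (ltn0Sn M).
rewrite !coefB !coefXM /= !subr0 IH => h.
by apply/eqP; rewrite -subr_eq0 h.
Qed.

Lemma T_F N x y : (y <= x)%N -> (x <= N)%N ->
  ((T N x y)%:R : int) = (Fp N.+1 (x - y).+1)`_(N - x).
Proof.
move=> hyx hxN.
move: {2}((N - x) + (N - y))%N (leqnn ((N - x) + (N - y))%N) => k.
elim: k x y hyx hxN => [|k IH] x y hyx hxN hk.
  have ex : x = N by lia.
  have ey : y = N by lia.
  by subst; rewrite TS !eqxx /= !(T_xbig N N.+1) // ltnn !muln0 mul0n !addn0 subnn Fp_coef0.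
case: (eqVneq x N) => [ex|nex].
  subst x; case: (eqVneq y N) => [ey|ney].
    by subst; rewrite TS !eqxx /= !(T_xbig N N.+1) // ltnn !muln0 mul0n !addn0 subnn Fp_coef0.
  have hy : (y < N)%N by lia.
  rewrite TS !(T_xbig N N.+1) // !muln0 !addn0 hy mul1n.
  have -> : ((N == N) && (y == N)) = false by rewrite (negbTE ney) andbF.
  rewrite add0n IH ?subnn ?Fp_coef0 //; lia.
have hx : (x < N)%N by lia.
have [u hu] : exists u, (N - x = u.+1)%N by exists (N - x).-1; lia.
rewrite hu Fp_coef_rel; last by lia.
rewrite TS.
have -> : ((x == N) && (y == N)) = false by rewrite (negbTE nex).
rewrite add0n (leq_trans hyx (leqnSn x)) mul1n hyx mul1n.
case: (eqVneq y x) => [eyx|neyx].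
  subst y; rewrite ltnn mul0n addn0 subnn.
  rewrite natrD !IH; try lia.
  have -> : (N - x.+1 = u)%N by lia.
  have -> : (x.+1 - x = 1)%N by lia.
  rewrite subnn /Fp trans0 H0 coef1 /= addrC; ring.
have hyx' : (y < x)%N by lia.
rewrite hyx' mul1n !natrD !IH; try lia.
have -> : (N - x.+1 = u)%N by lia.
have -> : (x.+1 - y = (x - y).+1)%N by lia.
have -> : (x - y.+1).+1 = (x - y)%N by lia.
have -> : (x.+1 - y.+1 = x - y)%N by lia.
by rewrite hu; ring.
Qed.

End PolyPart.
Unset Implicit Arguments.

Lemma bm_id k : (k * 'C(2 * k, k) = k.+1 * bm (2 * k) k)%N.
Proof.
case: k => [|k] /=; first by rewrite mul0n muln0.
have := mul_bin_left (2 * k.+1) k.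
have -> : (2 * k.+1 - k = k.+2)%N by lia.
by move=> ->.
Qed.

Lemma bm_le k : (bm (2 * k) k <= 'C(2 * k, k))%N.
Proof.
have h := bm_id k.
have : (k.+1 * bm (2 * k) k <= k.+1 * 'C(2 * k, k))%N by rewrite -h leq_mul2r leqnSn orbT.
by rewrite leq_mul2l.
Qed.

Lemma cat_sub k : catalan k = ('C(2 * k, k) - bm (2 * k) k)%N.
Proof.
rewrite /catalan.
have E : 'C(2 * k, k) = (k.+1 * ('C(2 * k, k) - bm (2 * k) k))%N.
  rewrite mulnBr -bm_id; have := bm_le k; lia.
by rewrite {1}E mulKn.
Qed.

Lemma cat_mul k : (catalan k * k.+1 = 'C(2 * k, k))%N.
Proof. rewrite cat_sub mulnC mulnBr -bm_id; have := bm_le k; lia. Qed.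

Lemma cat_gt0 k : (0 < catalan k)%N.
Proof.
case E: (catalan k) => [|c] //; have := cat_mul k; rewrite E mul0n => h.
have := bin_gt0 (2 * k) k; rewrite -h; lia.
Qed.

Lemma balz1 m : balz 1 m = Posz (catalan m).
Proof. by rewrite /balz addn0 cat_sub subzn // bm_le. Qed.



Section Formula.
Local Open Scope ring_scope.
Lemma schroeder_formula N : schroeder N.+1 =
  (\sum_(m < N.+2) 2 ^ m.+1 * catalan m * (3 ^ (N - 2 * m) * 'C(N, 2 * m)))%N.
Proof.
apply/eqP; rewrite -(eqr_nat int); apply/eqP.
rewrite schroederE T_F // subn0 /Fp trans1 coefD H0 coef1 /= add0r.
rewrite /H coef_sum natr_sum; apply: eq_bigr => m _.
rewrite coefCM addn1 RR_coef; last by [].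
rewrite /cf balz1 !natrM !natrX !natz addn1. ring.
Qed.

End Formula.

Lemma val_split K i0 (F : nat -> nat) e : i0 < K -> 0 < F i0 -> logn 3 (F i0) = e ->
  (forall i, i < K -> i != i0 -> 3 ^ e.+1 %| F i) ->
  logn 3 (\sum_(i < K) F i) = e.
Proof.
move=> hi0 hF he hd.
rewrite (bigD1 (Ordinal hi0)) //=.
set r := \sum_(i < K | _) _.
have hr : 3 ^ e.+1 %| r.
  apply: dvdn_sum => i hi; apply: hd; first exact: ltn_ord.
  by move: hi; apply: contra => /eqP h; apply/eqP; apply: val_inj.
have hpos : 0 < F i0 + r by rewrite addn_gt0 hF.
apply/eqP; rewrite eqn_leq; apply/andP; split.
  rewrite leqNgt; apply/negP => h.
  have : 3 ^ e.+1 %| F i0 + r by rewrite pfactor_dvdn.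
  rewrite dvdn_addl // pfactor_dvdn // he; lia.
rewrite -pfactor_dvdn //; apply: dvdn_add.
  by rewrite -he pfactor_dvdnn.
by apply: dvdn_trans hr; rewrite dvdn_exp2l.
Qed.

Lemma fact_cat k : catalan k * (k`! * k.+1`!) = (2 * k)`!.
Proof.
have hk : k <= 2 * k by lia.
have h := bin_fact hk.
have e2 : 2 * k - k = k by lia.
rewrite e2 in h.
rewrite -h -cat_mul factS; ring.
Qed.

Lemma bin_fact' n k : k <= n -> 'C(n, k) * (k`! * (n - k)`!) = n`!.
Proof. exact: bin_fact. Qed.

Lemma cat_id m j : catalan m * 'C(2 * (m + j), 2 * m) * 'C(2 * j, j)
  = catalan (m + j) * 'C(m + j, j) * 'C((m + j).+1, j).
Proof.
set P := m`! * m.+1`! * (j`! * j`!).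
have hP : 0 < P by rewrite /P !muln_gt0 !fact_gt0.
have f1 : 'C(2 * j, j) * (j`! * j`!) = (2 * j)`!.
  by have := bin_fact' (2 * j) j ltac:(lia); have -> : 2 * j - j = j by lia.
have f2 : 'C(2 * (m + j), 2 * m) * ((2 * m)`! * (2 * j)`!) = (2 * (m + j))`!.
  by have := bin_fact' (2 * (m + j)) (2 * m) ltac:(lia); have -> : 2 * (m + j) - 2 * m = 2 * j by lia.
have f3 : 'C(m + j, j) * (j`! * m`!) = (m + j)`!.
  by have := bin_fact' (m + j) j ltac:(lia); have -> : m + j - j = m by lia.
have f4 : 'C((m + j).+1, j) * (j`! * m.+1`!) = (m + j).+1`!.
  by have := bin_fact' (m + j).+1 j ltac:(lia); have -> : (m + j).+1 - j = m.+1 by lia.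
apply/eqP; rewrite -(eqn_pmul2r hP); apply/eqP.
transitivity ((2 * (m + j))`!).
  transitivity ((catalan m * (m`! * m.+1`!)) * ('C(2 * j, j) * (j`! * j`!)) * 'C(2 * (m + j), 2 * m)).
    by rewrite /P; ring.
  by rewrite fact_cat f1 -f2; ring.
transitivity (catalan (m + j) * ('C(m + j, j) * (j`! * m`!)) * ('C((m + j).+1, j) * (j`! * m.+1`!))).
  by rewrite f3 f4 -fact_cat; ring.
by rewrite /P; ring.
Qed.

Lemma binC4 j : 'C(2 * j.+1, j.+1) <= 4 * 'C(2 * j, j).
Proof.
have e1 : 2 * j.+1 = (2 * j).+2 by lia.
rewrite e1 binS.
have -> : 'C((2 * j).+1, j.+1) = 'C((2 * j).+1, j).
  by rewrite -bin_sub; [congr 'C(_, _); lia | lia].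
case: j e1 => [|j] e1; first by [].
rewrite binS.
have := bm_le j.+1; rewrite /=; lia.
Qed.

Lemma bnd j : 'C(2 * j.+1, j.+1) * (2 * j.+1).+1 < 9 ^ j.+1.
Proof.
elim: j => [|j IH]; first by [].
have h := binC4 j.+1.
rewrite expnS.
move: IH h; set c := 'C(2 * j.+1, j.+1); set c' := 'C(2 * j.+2, j.+2); set t := 9 ^ j.+1.
nia.
Qed.

Lemma logn_bnd j : 0 < j -> logn 3 ('C(2 * j, j) * (2 * j).+1) < 2 * j.
Proof.
case: j => // j _.
set B := _ * _.
have hB : 0 < B by rewrite /B muln_gt0 bin_gt0 andbT; lia.
have h1 : 3 ^ logn 3 B <= B by apply: dvdn_leq => //; apply: pfactor_dvdnn.
have h2 : B < 3 ^ (2 * j.+1) by rewrite expnM; apply: bnd.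
by rewrite -(ltn_exp2l _ _ (isT : 1 < 3)); apply: leq_ltn_trans h1 h2.
Qed.

Lemma dvd_from a B j e : 0 < a -> 0 < B -> logn 3 B < j -> 3 ^ (j + e) %| a * B ->
  3 ^ e.+1 %| a.
Proof.
move=> ha hB hl; rewrite !pfactor_dvdn ?muln_gt0 ?ha ?hB // lognM //; lia.
Qed.

Lemma logn32 k : logn 3 (2 ^ k) = 0.
Proof. by rewrite lognX (_ : logn 3 2 = 0) ?muln0. Qed.

Lemma odd_term i j : 0 < j ->
  3 ^ (logn 3 (catalan (i + j))).+1 %|
  2 ^ i.+1 * catalan i * (3 ^ (2 * (i + j) - 2 * i) * 'C(2 * (i + j), 2 * i)).
Proof.
move=> hj.
apply: (@dvd_from _ ('C(2 * j, j) * (2 * j).+1) (2 * j)).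
- by rewrite !muln_gt0 cat_gt0 expn_gt0 bin_gt0 /=; lia.
- by rewrite muln_gt0 bin_gt0; lia.
- exact: logn_bnd.
have -> : 2 * (i + j) - 2 * i = 2 * j by lia.
have -> : 2 ^ i.+1 * catalan i * (3 ^ (2 * j) * 'C(2 * (i + j), 2 * i)) *
  ('C(2 * j, j) * (2 * j).+1) = 2 ^ i.+1 * (2 * j).+1 * (3 ^ (2 * j) *
  (catalan i * 'C(2 * (i + j), 2 * i) * 'C(2 * j, j))) by ring.
rewrite cat_id expnD.
apply: dvdn_mull; apply: dvdn_mul => //.
by apply: dvdn_mulr; apply: dvdn_mulr; apply: pfactor_dvdnn.
Qed.

Lemma even_term i j : 0 < j ->
  3 ^ (logn 3 (catalan (i + j) * (3 * (2 * (i + j)).+1))).+1 %|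
  2 ^ i.+1 * catalan i * (3 ^ ((2 * (i + j)).+1 - 2 * i) * 'C((2 * (i + j)).+1, 2 * i)).
Proof.
move=> hj.
apply: (@dvd_from _ ('C(2 * j, j) * (2 * j).+1) (2 * j)).
- by rewrite !muln_gt0 cat_gt0 expn_gt0 bin_gt0 /=; lia.
- by rewrite muln_gt0 bin_gt0; lia.
- exact: logn_bnd.
have -> : (2 * (i + j)).+1 - 2 * i = (2 * j).+1 by lia.
have hb := mul_bin_down (2 * (i + j)).+1 (2 * i).
have e1 : (2 * (i + j)).+1 - 2 * i = (2 * j).+1 by lia.
rewrite e1 /= in hb.
have -> : 2 ^ i.+1 * catalan i * (3 ^ (2 * j).+1 * 'C((2 * (i + j)).+1, 2 * i)) *
  ('C(2 * j, j) * (2 * j).+1) = 2 ^ i.+1 * 3 ^ (2 * j) * 3 *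
  ((2 * j).+1 * 'C((2 * (i + j)).+1, 2 * i)) * catalan i * 'C(2 * j, j)
  by rewrite [3 ^ (2 * j).+1]expnS; ring.
rewrite -hb.
have -> : 2 ^ i.+1 * 3 ^ (2 * j) * 3 * ((2 * (i + j)).+1 * 'C(2 * (i + j), 2 * i)) *
   catalan i * 'C(2 * j, j) = 2 ^ i.+1 * 3 ^ (2 * j) * (3 * (2 * (i + j)).+1) *
   (catalan i * 'C(2 * (i + j), 2 * i) * 'C(2 * j, j)) by ring.
rewrite cat_id.
have -> : 2 ^ i.+1 * 3 ^ (2 * j) * (3 * (2 * (i + j)).+1) *
   (catalan (i + j) * 'C(i + j, j) * 'C((i + j).+1, j)) =
   2 ^ i.+1 * (3 ^ (2 * j) * ((catalan (i + j) * (3 * (2 * (i + j)).+1)) *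
   ('C(i + j, j) * 'C((i + j).+1, j)))) by ring.
rewrite expnD; apply: dvdn_mull; apply: dvdn_mul => //.
by apply: dvdn_mulr; apply: pfactor_dvdnn.
Qed.


Unset Implicit Arguments.
Theorem theorem6 (n : nat) :
  logn 3 (schroeder (2 * n + 1)) = logn 3 (catalan n) /\
  logn 3 (schroeder (2 * n + 2)) = 1 + logn 3 (2 * n + 1) + logn 3 (catalan n).
Proof.
split.
  rewrite (_ : 2 * n + 1 = (2 * n).+1); last by lia.
  rewrite schroeder_formula.
  apply: (@val_split (2 * n).+2 n
    (fun m => 2 ^ m.+1 * catalan m * (3 ^ (2 * n - 2 * m) * 'C(2 * n, 2 * m)))).
  - lia.
  - by rewrite /= subnn binn !muln_gt0 cat_gt0 expn_gt0.
  - by rewrite /= subnn binn expn0 !muln1 lognM ?cat_gt0 ?expn_gt0 // logn32.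
  move=> i hi hin /=.
  case: (ltnP i n) => hin'.
    have := odd_term i (n - i) ltac:(lia).
    by rewrite subnKC // ltnW.
  rewrite bin_small ?muln0 ?dvdn0 //.
  have : n < i by rewrite ltn_neqAle eq_sym hin hin'.
  lia.
rewrite (_ : 2 * n + 2 = ((2 * n).+1).+1); last by lia.
rewrite schroeder_formula.
rewrite (@val_split ((2 * n).+1).+2 n
    (fun m => 2 ^ m.+1 * catalan m * (3 ^ ((2 * n).+1 - 2 * m) * 'C((2 * n).+1, 2 * m)))
    (logn 3 (catalan n * (3 * (2 * n).+1)))).
- rewrite lognM ?cat_gt0 // lognM // (_ : logn 3 3 = 1) // addn1; lia.
- lia.
- by rewrite /= binSn !muln_gt0 cat_gt0 !expn_gt0.
- have -> : (2 * n).+1 - 2 * n = 1 by lia.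
  by rewrite /= binSn expn1 -mulnA lognM ?expn_gt0 ?muln_gt0 ?cat_gt0 // logn32.
move=> i hi hin /=.
case: (ltnP i n) => hin'.
  have := even_term i (n - i) ltac:(lia).
  by rewrite subnKC // ltnW.
rewrite bin_small ?muln0 ?dvdn0 //.
have : n < i by rewrite ltn_neqAle eq_sym hin hin'.
lia.
Qed.
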